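(* Let $f\colon\mathbb{R}^2\to\mathbb{R}^3$ be a regular smooth surface parametrization without parabolic and umbilic points, oriented by a smooth unit normal field $n$, with principal curvatures $\kappa_1\neq\kappa_2$ (both nonzero) with respect to $n$. Let $s$ be an attached tangent sphere congruence of $f$ with signed radius function $r$ (definitions in the context). Let $(t_1,t_2,n)$ be an orthonormal principal frame at a point $f(u,v)$, $t_i$ being the principal direction of $\kappa_i$. Then two non-parallel tangent vectors $\bar a=\bar a_1t_1+\bar a_2t_2$ and $\bar b=\bar b_1t_1+\bar b_2t_2$ at $f(u,v)$ are L-conjugate with respect to $s$ if and only if $$(\kappa_2^{-1}-r)\,\bar a_1\bar b_1+(\kappa_1^{-1}-r)\,\bar a_2\bar b_2=0,$$ where $r$ and $\kappa_1,\kappa_2$ are evaluated at $(u,v)$.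
   Context: $\mathbb{R}^{3,1}$ is $\mathbb{R}^4$ with inner product $\langle\langle X,Y\rangle\rangle=X_1Y_1+X_2Y_2+X_3Y_3-X_4Y_4$. Principal curvatures are the eigenvalues of the shape operator $-dn$ (so in a principal parametrization $n_u=-\kappa_1 f_u$, $n_v=-\kappa_2f_v$). Two tangent vectors $a,\bar a$ are conjugate (in the ordinary sense) if $\mathrm{II}(a,\bar a)=0$ for the second fundamental form with respect to $n$; in a principal frame this reads $\kappa_1a_1\bar a_1+\kappa_2a_2\bar a_2=0$. An oriented sphere is a pair $(c,\rho)$ with center $c\in\mathbb{R}^3$ and signed radius $\rho\in\mathbb{R}$ (radius zero allowed). The oriented tangent plane $p(u,v)$ at $f(u,v)$ is the plane through $f(u,v)$ with unit normal $n(u,v)$; it is written $\langle n,x\rangle+h=0$ with $h=-\langle n,f\rangle$. An attached tangent sphere congruence is a map assigning to each $(u,v)$ an oriented sphere $s(u,v)$ with signed radius $r(u,v)$ and center $f(u,v)+r(u,v)n(u,v)$ (i.e., in oriented contact with $p(u,v)$ at $f(u,v)$) such that its Minkowski lift $S(u,v):=(f+rn,\,r)\in\mathbb{R}^{3,1}$ is a regular smooth net ($S_u\not\parallel S_v$). The Minkowski lift of $p(u,v)$ is the isotropic hyperplane $P(u,v)=\{(x,x_4): x_4=\langle n,x\rangle+h\}$, with normal $N=(n,1)$. For a regular net $S$ with attached hyperplanes $P$, two non-parallel tangent vectors $T_1,T_2$ of $S$ are L-conjugate with respect to $P$ if there is a diffeomorphism $D$ of $\mathbb{R}^2$ such that for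 $\bar S=S\circ D,\bar P=P\circ D$, at the relevant parameter, $\bar S_u\parallel T_1$, $\bar S_v\parallel T_2$ and $\bar S_u,\bar S_v,\bar S_{uv}$ are parallel to $\bar P$. Two non-parallel tangent vectors $a,b$ of $f$ at $f(u,v)$ are L-conjugate with respect to $s$ if there is a diffeomorphism $D$ of $\mathbb{R}^2$ such that, with $\bar f=f\circ D$ and $\bar S,\bar P$ the Minkowski lifts of $s\circ D,p\circ D$, at the relevant parameter $\bar f_u$ is conjugate to $a$, $\bar f_v$ is conjugate to $b$, and $\bar S_u$ is L-conjugate to $\bar S_v$ with respect to $\bar P$. *)

(* Defs.v *)
From Stdlib Require Import Reals.
From Coquelicot Require Import Coquelicot.
Open Scope R_scope.

Definition Fun2 := R -> R -> R.

Definition du (g : Fun2) : Fun2 := fun u v => Derive (fun x => g x v) u.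
Definition dv (g : Fun2) : Fun2 := fun u v => Derive (fun y => g u y) v.

Definition cont2 (g : Fun2) : Prop :=
  forall u v eps, 0 < eps -> exists delta, 0 < delta /\
    forall u' v', Rabs (u' - u) < delta -> Rabs (v' - v) < delta ->
      Rabs (g u' v' - g u v) < eps.

Definition partials_exist (g : Fun2) : Prop :=
  forall u v, ex_derive (fun x => g x v) u /\ ex_derive (fun y => g u y) v.

Fixpoint Ck (k : nat) (g : Fun2) : Prop :=
  match k with
  | O => cont2 g
  | S k' => cont2 g /\ partials_exist g /\ Ck k' (du g) /\ Ck k' (dv g)
  end.

Definition smooth2 (g : Fun2) : Prop := forall k, Ck k g.

Definition diffeo2 (d1 d2 : Fun2) : Prop :=
  smooth2 d1 /\ smooth2 d2 /\
  exists e1 e2 : Fun2, smooth2 e1 /\ smooth2 e2 /\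
    (forall u v, e1 (d1 u v) (d2 u v) = u /\ e2 (d1 u v) (d2 u v) = v) /\
    (forall u v, d1 (e1 u v) (e2 u v) = u /\ d2 (e1 u v) (e2 u v) = v).

Record V3 := mkV3 { x1 : R; x2 : R; x3 : R }.
Definition add3 (a b : V3) := mkV3 (x1 a + x1 b) (x2 a + x2 b) (x3 a + x3 b).
Definition scal3 (l : R) (a : V3) := mkV3 (l * x1 a) (l * x2 a) (l * x3 a).
Definition dot3 (a b : V3) := x1 a * x1 b + x2 a * x2 b + x3 a * x3 b.
Definition zero3 := mkV3 0 0 0.
Definition indep3 (a b : V3) : Prop :=
  forall l m, add3 (scal3 l a) (scal3 m b) = zero3 -> l = 0 /\ m = 0.

Record V4 := mkV4 { y1 : R; y2 : R; y3 : R; y4 : R }.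
Definition add4 (a b : V4) :=
  mkV4 (y1 a + y1 b) (y2 a + y2 b) (y3 a + y3 b) (y4 a + y4 b).
Definition scal4 (l : R) (a : V4) :=
  mkV4 (l * y1 a) (l * y2 a) (l * y3 a) (l * y4 a).
Definition zero4 := mkV4 0 0 0 0.
Definition mink (a b : V4) := y1 a * y1 b + y2 a * y2 b + y3 a * y3 b - y4 a * y4 b.
Definition indep4 (a b : V4) : Prop :=
  forall l m, add4 (scal4 l a) (scal4 m b) = zero4 -> l = 0 /\ m = 0.
Definition parallel4 (a b : V4) : Prop := ~ indep4 a b.

Definition comp3 (F : R -> R -> V3) (d1 d2 : Fun2) : R -> R -> V3 :=
  fun u v => F (d1 u v) (d2 u v).
Definition comp4 (F : R -> R -> V4) (d1 d2 : Fun2) : R -> R -> V4 :=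
  fun u v => F (d1 u v) (d2 u v).

Definition du3 (F : R -> R -> V3) : R -> R -> V3 := fun u v =>
  mkV3 (du (fun a b => x1 (F a b)) u v) (du (fun a b => x2 (F a b)) u v)
       (du (fun a b => x3 (F a b)) u v).
Definition dv3 (F : R -> R -> V3) : R -> R -> V3 := fun u v =>
  mkV3 (dv (fun a b => x1 (F a b)) u v) (dv (fun a b => x2 (F a b)) u v)
       (dv (fun a b => x3 (F a b)) u v).
Definition du4 (F : R -> R -> V4) : R -> R -> V4 := fun u v =>
  mkV4 (du (fun a b => y1 (F a b)) u v) (du (fun a b => y2 (F a b)) u v)
       (du (fun a b => y3 (F a b)) u v) (du (fun a b => y4 (F a b)) u v).
Definition dv4 (F : R -> R -> V4) : R -> R -> V4 := fun u v =>
  mkV4 (dv (fun a b => y1 (F a b)) u v) (dv (fun a b => y2 (F a b)) u v)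
       (dv (fun a b => y3 (F a b)) u v) (dv (fun a b => y4 (F a b)) u v).

Definition smooth3 (F : R -> R -> V3) : Prop :=
  smooth2 (fun u v => x1 (F u v)) /\ smooth2 (fun u v => x2 (F u v)) /\
  smooth2 (fun u v => x3 (F u v)).
Definition smooth4 (F : R -> R -> V4) : Prop :=
  smooth2 (fun u v => y1 (F u v)) /\ smooth2 (fun u v => y2 (F u v)) /\
  smooth2 (fun u v => y3 (F u v)) /\ smooth2 (fun u v => y4 (F u v)).

Definition regular_surface (f : R -> R -> V3) : Prop :=
  smooth3 f /\ forall u v, indep3 (du3 f u v) (dv3 f u v).

Definition unit_normal (f n : R -> R -> V3) : Prop :=
  smooth3 n /\ forall u v, dot3 (n u v) (n u v) = 1 /\
    dot3 (n u v) (du3 f u v) = 0 /\ dot3 (n u v) (dv3 f u v) = 0.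

(* shape operator -dn applied to the tangent vector x f_u + y f_v *)
Definition shape (n : R -> R -> V3) (u v x y : R) : V3 :=
  scal3 (-1) (add3 (scal3 x (du3 n u v)) (scal3 y (dv3 n u v))).
Definition tangent (f : R -> R -> V3) (u v x y : R) : V3 :=
  add3 (scal3 x (du3 f u v)) (scal3 y (dv3 f u v)).

Definition principal_dir (f n : R -> R -> V3) (u v k : R) (t : V3) : Prop :=
  t <> zero3 /\ exists x y, t = tangent f u v x y /\ shape n u v x y = scal3 k t.

Definition principal_curvature (f n : R -> R -> V3) (u v k : R) : Prop :=
  exists t, principal_dir f n u v k t.

(* ordinary conjugacy of tangent vectors w, w' at f(u,v): II(w,w') = 0 *)
Definition conjugate (f n : R -> R -> V3) (u v : R) (w w' : V3) : Prop :=
  exists x y, w = tangent f u v x y /\ dot3 (shape n u v x y) w' = 0.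

(* lift of the attached tangent sphere s(u,v): S = (f + r n, r) *)
Definition sphere_lift (f n : R -> R -> V3) (r : Fun2) : R -> R -> V4 :=
  fun u v => let c := add3 (f u v) (scal3 (r u v) (n u v)) in
             mkV4 (x1 c) (x2 c) (x3 c) (r u v).

Definition tangent_sphere_congruence (f n : R -> R -> V3) (r : Fun2) : Prop :=
  smooth2 r /\ smooth4 (sphere_lift f n r) /\
  forall u v, indep4 (du4 (sphere_lift f n r) u v) (dv4 (sphere_lift f n r) u v).

(* X is parallel to the isotropic hyperplane P = {x4 = <n,x> + h},
   i.e. X4 = <n, (X1,X2,X3)>  (equivalently <<X,(n,1)>> = 0) *)
Definition par_hyp (nn : V3) (X : V4) : Prop :=
  y4 X = dot3 nn (mkV3 (y1 X) (y2 X) (y3 X)).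

(* L-conjugacy of tangent vectors T1, T2 of the net S at parameter (p,q) with
   respect to the attached hyperplanes P, whose normals are (nn,1). *)
Definition L_conj_net (S : R -> R -> V4) (nn : R -> R -> V3) (p q : R)
    (T1 T2 : V4) : Prop :=
  indep4 T1 T2 /\
  exists e1 e2 : Fun2, diffeo2 e1 e2 /\
  exists p' q', e1 p' q' = p /\ e2 p' q' = q /\
    let Sb := comp4 S e1 e2 in
    let nb := comp3 nn e1 e2 in
    parallel4 (du4 Sb p' q') T1 /\ parallel4 (dv4 Sb p' q') T2 /\
    par_hyp (nb p' q') (du4 Sb p' q') /\
    par_hyp (nb p' q') (dv4 Sb p' q') /\
    par_hyp (nb p' q') (dv4 (du4 Sb) p' q').

Definition L_conj_sphere (f n : R -> R -> V3) (r : Fun2) (u v : R) (a b : V3)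
    : Prop :=
  indep3 a b /\
  exists d1 d2 : Fun2, diffeo2 d1 d2 /\
  exists p q, d1 p q = u /\ d2 p q = v /\
    let fb := comp3 f d1 d2 in
    let nb := comp3 n d1 d2 in
    let Sb := comp4 (sphere_lift f n r) d1 d2 in
    conjugate f n u v (du3 fb p q) a /\
    conjugate f n u v (dv3 fb p q) b /\
    L_conj_net Sb nb p q (du4 Sb p q) (dv4 Sb p q).

(* Main.v *)
Require Import Defs.
From Stdlib Require Import Reals Lra Lia Psatz Classical.
From Coquelicot Require Import Coquelicot Derive_2d.
Open Scope R_scope.

Lemma cont2_2d g x y : cont2 g -> continuity_2d_pt g x y.
Proof. intros H eps. destruct (H x y eps (cond_pos eps)) as [d [Hd H']].
  exists (mkposreal d Hd). intros; apply H'; auto. Qed.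

Lemma Ck_exdiff : forall k g, Ck k g -> forall x y, ex_diff_n g k x y.
Proof. induction k; intros g H x y; simpl in *.
  - split; [apply cont2_2d; tauto| exact I].
  - destruct H as [Hc [Hp [H1 H2]]]. repeat split.
    + apply cont2_2d; auto.
    + apply Hp.
    + apply Hp.
    + apply (IHk _ H1).
    + apply (IHk _ H2).
Qed.

Lemma smooth_du g : smooth2 g -> smooth2 (du g).
Proof. intros H k. destruct (H (S k)) as [_ [_ [H1 _]]]. exact H1. Qed.
Lemma smooth_dv g : smooth2 g -> smooth2 (dv g).
Proof. intros H k. destruct (H (S k)) as [_ [_ [_ H1]]]. exact H1. Qed.
Lemma smooth_partials g : smooth2 g -> partials_exist g.
Proof. intros H. destruct (H 1%nat) as [_ [H1 _]]. exact H1. Qed.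

Lemma smooth_diff g x y : smooth2 g -> differentiable_pt_lim g x y (du g x y) (dv g x y).
Proof.
  intros H.
  assert (HT : DL_regular_n g 1 x y).
  { apply Taylor_Lagrange_2d. exists (mkposreal 1 Rlt_0_1). intros.
    apply Ck_exdiff. apply H. }
  destruct HT as [D [d HD]].
  intros eps.
  set (D' := Rabs D + 1).
  assert (HD' : 0 < D') by (unfold D'; pose proof (Rabs_pos D); lra).
  assert (He : 0 < Rmin d (eps / D')).
  { apply Rmin_pos. apply cond_pos. apply Rdiv_lt_0_compat; [apply cond_pos|lra]. }
  exists (mkposreal _ He). intros u' v' Hu Hv. simpl in Hu, Hv.
  assert (Hu1 : Rabs (u' - x) < d) by (eapply Rlt_le_trans; [exact Hu| apply Rmin_l]).
  assert (Hv1 : Rabs (v' - y) < d) by (eapply Rlt_le_trans; [exact Hv| apply Rmin_r || apply Rmin_l]).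
  specialize (HD u' v' Hu1 Hv1).
  assert (Hpol : DL_pol 1 g x y (u' - x) (v' - y) = g x y + du g x y * (u' - x) + dv g x y * (v' - y)).
  { unfold DL_pol, differential, partial_derive, Binomial.C, du, dv. simpl. field. }
  rewrite Hpol in HD.
  set (M := Rmax (Rabs (u' - x)) (Rabs (v' - y))) in *.
  assert (HM0 : 0 <= M) by (unfold M; eapply Rle_trans; [apply Rabs_pos| apply Rmax_l]).
  assert (HM : M < eps / D').
  { unfold M. apply Rmax_lub_lt. eapply Rlt_le_trans; [exact Hu| apply Rmin_r]. eapply Rlt_le_trans; [exact Hv| apply Rmin_r]. }
  assert (HDM : D * M ^ 2 <= D' * M * M).
  { assert (D <= D') by (unfold D'; pose proof (Rle_abs D); lra). simpl. nra. }
  assert (D' * M <= eps).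
  { apply Rlt_le in HM. apply (Rmult_le_compat_l D') in HM; [|lra].
    replace (D' * (eps / D')) with (pos eps) in HM by (field; lra). lra. }
  replace (g u' v' - g x y - (du g x y * (u' - x) + dv g x y * (v' - y)))
    with (g u' v' - (g x y + du g x y * (u' - x) + dv g x y * (v' - y))) by ring.
  eapply Rle_trans; [exact HD|]. eapply Rle_trans; [exact HDM|]. nra.
Qed.

Lemma chain g (a b : R -> R) t : smooth2 g -> ex_derive a t -> ex_derive b t ->
  is_derive (fun s => g (a s) (b s)) t
    (du g (a t) (b t) * Derive a t + dv g (a t) (b t) * Derive b t).
Proof.
  intros H Ha Hb. apply is_derive_Reals. apply derivable_pt_lim_comp_2d.
  - apply smooth_diff, H.
  - apply is_derive_Reals, Derive_correct, Ha.
  - apply is_derive_Reals, Derive_correct, Hb.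
Qed.


Lemma comp_du_is g G1 G2 x y : smooth2 g -> ex_derive (fun s => G1 s y) x -> ex_derive (fun s => G2 s y) x ->
  is_derive (fun s => g (G1 s y) (G2 s y)) x
   (du g (G1 x y) (G2 x y) * du G1 x y + dv g (G1 x y) (G2 x y) * du G2 x y).
Proof. intros H H1 H2. exact (chain g (fun s => G1 s y) (fun s => G2 s y) x H H1 H2). Qed.

Lemma comp_dv_is g G1 G2 x y : smooth2 g -> ex_derive (fun s => G1 x s) y -> ex_derive (fun s => G2 x s) y ->
  is_derive (fun s => g (G1 x s) (G2 x s)) y
   (du g (G1 x y) (G2 x y) * dv G1 x y + dv g (G1 x y) (G2 x y) * dv G2 x y).
Proof. intros H H1 H2. exact (chain g (fun s => G1 x s) (fun s => G2 x s) y H H1 H2). Qed.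

Lemma comp_du g G1 G2 x y : smooth2 g -> ex_derive (fun s => G1 s y) x -> ex_derive (fun s => G2 s y) x ->
  du (fun a b => g (G1 a b) (G2 a b)) x y =
   du g (G1 x y) (G2 x y) * du G1 x y + dv g (G1 x y) (G2 x y) * du G2 x y.
Proof. intros. apply is_derive_unique. apply comp_du_is; auto. Qed.

Lemma comp_dv g G1 G2 x y : smooth2 g -> ex_derive (fun s => G1 x s) y -> ex_derive (fun s => G2 x s) y ->
  dv (fun a b => g (G1 a b) (G2 a b)) x y =
   du g (G1 x y) (G2 x y) * dv G1 x y + dv g (G1 x y) (G2 x y) * dv G2 x y.
Proof. intros. apply is_derive_unique. apply comp_dv_is; auto. Qed.

Lemma comp_partials g G1 G2 : smooth2 g -> partials_exist G1 -> partials_exist G2 ->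
  partials_exist (fun a b => g (G1 a b) (G2 a b)).
Proof. intros H H1 H2 x y. destruct (H1 x y), (H2 x y). split.
  - eexists. apply comp_du_is; auto.
  - eexists. apply comp_dv_is; auto. Qed.

Lemma Ck_ext : forall k g h, (forall x y, g x y = h x y) -> Ck k g -> Ck k h.
Proof.
  induction k; intros g h E H; simpl in *.
  - intros u v eps He. destruct (H u v eps He) as [d [Hd H']]. exists d. split; auto.
    intros. rewrite <- !E. auto.
  - destruct H as [Hc [Hp [H1 H2]]]. split; [|split; [|split]].
    + intros u v eps He. destruct (Hc u v eps He) as [d [Hd H']]. exists d. split; auto.
      intros. rewrite <- !E. auto.
    + intros x y. destruct (Hp x y). split; eapply ex_derive_ext; try eassumption; intros; simpl; auto.
    + eapply IHk; [|exact H1]. intros. unfold du. apply Derive_ext. auto.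
    + eapply IHk; [|exact H2]. intros. unfold dv. apply Derive_ext. auto.
Qed.

Lemma affine_cont2 g c a b : (forall x y, g x y = c + a*x + b*y) -> cont2 g.
Proof.
  intros E u v eps He.
  set (K := Rabs a + Rabs b + 1).
  assert (HK : 0 < K) by (unfold K; pose proof (Rabs_pos a); pose proof (Rabs_pos b); lra).
  exists (eps / K). split. apply Rdiv_lt_0_compat; lra.
  intros u' v' H1 H2. rewrite !E.
  replace (c + a * u' + b * v' - (c + a * u + b * v)) with (a * (u' - u) + b * (v' - v)) by ring.
  eapply Rle_lt_trans. apply Rabs_triang. rewrite !Rabs_mult.
  assert (Rabs a * Rabs (u' - u) <= Rabs a * (eps / K)).
  { apply Rmult_le_compat_l. apply Rabs_pos. lra. }
  assert (Rabs b * Rabs (v' - v) <= Rabs b * (eps / K)).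
  { apply Rmult_le_compat_l. apply Rabs_pos. lra. }
  assert ((Rabs a + Rabs b) * (eps / K) < eps).
  { replace (Rabs a + Rabs b) with (K - 1) by (unfold K; ring).
    replace ((K - 1) * (eps / K)) with (eps - eps / K) by (field; lra).
    assert (0 < eps / K) by (apply Rdiv_lt_0_compat; lra). lra. }
  nra.
Qed.

Lemma affine_Ck : forall k g c a b, (forall x y, g x y = c + a*x + b*y) -> Ck k g.
Proof.
  induction k; intros g c a b E; simpl.
  - eapply affine_cont2; eauto.
  - split; [eapply affine_cont2; eauto|split; [|split]].
    + intros x y. split.
      * apply ex_derive_ext with (fun s => c + a * s + b * y). intros; rewrite E; auto. auto_derive. auto.
      * apply ex_derive_ext with (fun s => c + a * x + b * s). intros; rewrite E; auto. auto_derive. auto.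
    + apply (IHk _ a 0 0). intros x y. unfold du.
      rewrite (Derive_ext _ (fun s => c + a * s + b * y)); [|intros; rewrite E; auto].
      apply is_derive_unique. auto_derive; auto. ring.
    + apply (IHk _ b 0 0). intros x y. unfold dv.
      rewrite (Derive_ext _ (fun s => c + a * x + b * s)); [|intros; rewrite E; auto].
      apply is_derive_unique. auto_derive; auto. ring.
Qed.

Lemma affine_diffeo d1 d2 c1 c2 m11 m12 m21 m22 :
  m11 * m22 - m12 * m21 <> 0 ->
  (forall p q, d1 p q = c1 + m11 * p + m12 * q) ->
  (forall p q, d2 p q = c2 + m21 * p + m22 * q) -> diffeo2 d1 d2.
Proof.
  intros Hdet E1 E2. set (de := m11 * m22 - m12 * m21).
  split; [intro k; eapply affine_Ck; eauto|split; [intro k; eapply affine_Ck; eauto|]].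
  exists (fun p q => (m22 * (p - c1) - m12 * (q - c2)) / de).
  exists (fun p q => (m11 * (q - c2) - m21 * (p - c1)) / de).
  split; [|split; [|split]].
  - intro k. apply (affine_Ck _ _ ((- m22 * c1 + m12 * c2)/de) (m22/de) (-m12/de)).
    intros; unfold de; field; auto.
  - intro k. apply (affine_Ck _ _ ((- m11 * c2 + m21 * c1)/de) (-m21/de) (m11/de)).
    intros; unfold de; field; auto.
  - intros u v. rewrite E1, E2. unfold de. split; field; auto.
  - intros u v. rewrite E1, E2. unfold de. split; field; auto.
Qed.

Lemma diffeo_jac d1 d2 x y : diffeo2 d1 d2 ->
  du d1 x y * dv d2 x y - dv d1 x y * du d2 x y <> 0.
Proof.
  intros [H1 [H2 [e1 [e2 [He1 [He2 [Hl _]]]]]]].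
  destruct (smooth_partials d1 H1 x y) as [p1u p1v].
  destruct (smooth_partials d2 H2 x y) as [p2u p2v].
  assert (A1 : du (fun a b => e1 (d1 a b) (d2 a b)) x y = 1).
  { unfold du. rewrite (Derive_ext _ id). apply Derive_id. intros; apply Hl. }
  assert (A2 : dv (fun a b => e1 (d1 a b) (d2 a b)) x y = 0).
  { unfold dv. rewrite (Derive_ext _ (fun _ => x)). apply Derive_const. intros; apply Hl. }
  assert (A3 : du (fun a b => e2 (d1 a b) (d2 a b)) x y = 0).
  { unfold du. rewrite (Derive_ext _ (fun _ => y)). apply Derive_const. intros; apply Hl. }
  assert (A4 : dv (fun a b => e2 (d1 a b) (d2 a b)) x y = 1).
  { unfold dv. rewrite (Derive_ext _ id). apply Derive_id. intros; apply Hl. }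
  rewrite comp_du in A1, A3 by auto. rewrite comp_dv in A2, A4 by auto.
  set (A := du e1 (d1 x y) (d2 x y)) in *. set (B := dv e1 (d1 x y) (d2 x y)) in *.
  set (C := du e2 (d1 x y) (d2 x y)) in *. set (D := dv e2 (d1 x y) (d2 x y)) in *.
  intro H0.
  assert (E : (A*D-B*C)*(du d1 x y * dv d2 x y - dv d1 x y * du d2 x y) =
     (A*du d1 x y+B*du d2 x y)*(C*dv d1 x y+D*dv d2 x y) - (A*dv d1 x y+B*dv d2 x y)*(C*du d1 x y+D*du d2 x y)) by ring.
  rewrite H0, A1, A2, A3, A4 in E. lra.
Qed.


Lemma Derive_sq3 (a b c : R -> R) t : ex_derive a t -> ex_derive b t -> ex_derive c t ->
  (forall s, a s * a s + b s * b s + c s * c s = 1) ->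
  a t * Derive a t + b t * Derive b t + c t * Derive c t = 0.
Proof.
  intros Ha Hb Hc E.
  assert (D1 : Derive (fun s => a s * a s + b s * b s + c s * c s) t = 0).
  { rewrite (Derive_ext _ (fun _ => 1)); auto. apply Derive_const. }
  assert (D2 : is_derive (fun s => a s * a s + b s * b s + c s * c s) t
     (2 * (a t * Derive a t + b t * Derive b t + c t * Derive c t))).
  { auto_derive; [repeat split; auto | ].
    replace (Derive (fun x => a x) t) with (Derive a t) by reflexivity.
    replace (Derive (fun x => b x) t) with (Derive b t) by reflexivity.
    replace (Derive (fun x => c x) t) with (Derive c t) by reflexivity. ring. }
  apply is_derive_unique in D2.
  assert (E2 : 2 * (a t * Derive a t + b t * Derive b t + c t * Derive c t) = 0).
  { rewrite <- D2. exact D1. }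
  lra.
Qed.

Lemma Derive_lin (F Rr N : R -> R) t : ex_derive F t -> ex_derive Rr t -> ex_derive N t ->
  Derive (fun s => F s + Rr s * N s) t = Derive F t + Derive Rr t * N t + Rr t * Derive N t.
Proof. intros. apply is_derive_unique. auto_derive; [repeat split; auto | ].
  replace (Derive (fun x => F x) t) with (Derive F t) by reflexivity.
  replace (Derive (fun x => Rr x) t) with (Derive Rr t) by reflexivity.
  replace (Derive (fun x => N x) t) with (Derive N t) by reflexivity. ring. Qed.

Lemma sp_u (g : Fun2) x y : smooth2 g -> ex_derive (fun s => g s y) x.
Proof. intros H. exact (proj1 (smooth_partials g H x y)). Qed.
Lemma sp_v (g : Fun2) x y : smooth2 g -> ex_derive (fun s => g x s) y.
Proof. intros H. exact (proj2 (smooth_partials g H x y)). Qed.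

Definition HypS f n r := smooth3 f /\ smooth3 n /\ smooth2 r /\ smooth4 (sphere_lift f n r) /\
  (forall u v, dot3 (n u v) (n u v) = 1 /\ dot3 (n u v) (du3 f u v) = 0 /\ dot3 (n u v) (dv3 f u v) = 0).

Definition mk (X : V4) (m : V3) := x1 m * y1 X + x2 m * y2 X + x3 m * y3 X - y4 X.

Lemma par_hyp_mk m X : par_hyp m X <-> mk X m = 0.
Proof. unfold par_hyp, mk, dot3; cbn [x1 x2 x3]. split; intro; lra. Qed.

Lemma mk_lin a X b Y m : mk (add4 (scal4 a X) (scal4 b Y)) m = a * mk X m + b * mk Y m.
Proof. unfold mk, add4, scal4; cbn [y1 y2 y3 y4]; ring. Qed.

Lemma nn_du f n r u v : HypS f n r -> dot3 (n u v) (du3 n u v) = 0.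
Proof.
  intros [_ [[n1 [n2 n3]] [_ [_ H]]]].
  unfold dot3, du3; cbn [x1 x2 x3]. unfold du.
  apply (Derive_sq3 (fun s => x1 (n s v)) (fun s => x2 (n s v)) (fun s => x3 (n s v))).
  apply (sp_u _ u v n1). apply (sp_u _ u v n2). apply (sp_u _ u v n3).
  intros s. apply (H s v).
Qed.

Lemma nn_dv f n r u v : HypS f n r -> dot3 (n u v) (dv3 n u v) = 0.
Proof.
  intros [_ [[n1 [n2 n3]] [_ [_ H]]]].
  unfold dot3, dv3; cbn [x1 x2 x3]. unfold dv.
  apply (Derive_sq3 (fun s => x1 (n u s)) (fun s => x2 (n u s)) (fun s => x3 (n u s))).
  apply (sp_v _ u v n1). apply (sp_v _ u v n2). apply (sp_v _ u v n3).
  intros s. apply (H u s).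
Qed.

Lemma dS_u f n r u v : HypS f n r ->
  y1 (du4 (sphere_lift f n r) u v) = x1 (du3 f u v) + du r u v * x1 (n u v) + r u v * x1 (du3 n u v) /\
  y2 (du4 (sphere_lift f n r) u v) = x2 (du3 f u v) + du r u v * x2 (n u v) + r u v * x2 (du3 n u v) /\
  y3 (du4 (sphere_lift f n r) u v) = x3 (du3 f u v) + du r u v * x3 (n u v) + r u v * x3 (du3 n u v) /\
  y4 (du4 (sphere_lift f n r) u v) = du r u v.
Proof.
  intros [[f1 [f2 f3]] [[n1 [n2 n3]] [Hr _]]].
  split; [|split; [|split]]; try reflexivity.
  - change (Derive (fun s => x1 (f s v) + r s v * x1 (n s v)) u = Derive (fun s => x1 (f s v)) u + Derive (fun s => r s v) u * x1 (n u v) + r u v * Derive (fun s => x1 (n s v)) u).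
    apply (Derive_lin (fun s => x1 (f s v)) (fun s => r s v) (fun s => x1 (n s v)) u). apply (sp_u _ u v f1). apply (sp_u _ u v Hr). apply (sp_u _ u v n1).
  - change (Derive (fun s => x2 (f s v) + r s v * x2 (n s v)) u = Derive (fun s => x2 (f s v)) u + Derive (fun s => r s v) u * x2 (n u v) + r u v * Derive (fun s => x2 (n s v)) u).
    apply (Derive_lin (fun s => x2 (f s v)) (fun s => r s v) (fun s => x2 (n s v)) u). apply (sp_u _ u v f2). apply (sp_u _ u v Hr). apply (sp_u _ u v n2).
  - change (Derive (fun s => x3 (f s v) + r s v * x3 (n s v)) u = Derive (fun s => x3 (f s v)) u + Derive (fun s => r s v) u * x3 (n u v) + r u v * Derive (fun s => x3 (n s v)) u).
    apply (Derive_lin (fun s => x3 (f s v)) (fun s => r s v) (fun s => x3 (n s v)) u). apply (sp_u _ u v f3). apply (sp_u _ u v Hr). apply (sp_u _ u v n3).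
Qed.

Lemma dS_v f n r u v : HypS f n r ->
  y1 (dv4 (sphere_lift f n r) u v) = x1 (dv3 f u v) + dv r u v * x1 (n u v) + r u v * x1 (dv3 n u v) /\
  y2 (dv4 (sphere_lift f n r) u v) = x2 (dv3 f u v) + dv r u v * x2 (n u v) + r u v * x2 (dv3 n u v) /\
  y3 (dv4 (sphere_lift f n r) u v) = x3 (dv3 f u v) + dv r u v * x3 (n u v) + r u v * x3 (dv3 n u v) /\
  y4 (dv4 (sphere_lift f n r) u v) = dv r u v.
Proof.
  intros [[f1 [f2 f3]] [[n1 [n2 n3]] [Hr _]]].
  split; [|split; [|split]]; try reflexivity.
  - change (Derive (fun s => x1 (f u s) + r u s * x1 (n u s)) v = Derive (fun s => x1 (f u s)) v + Derive (fun s => r u s) v * x1 (n u v) + r u v * Derive (fun s => x1 (n u s)) v).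
    apply (Derive_lin (fun s => x1 (f u s)) (fun s => r u s) (fun s => x1 (n u s)) v). apply (sp_v _ u v f1). apply (sp_v _ u v Hr). apply (sp_v _ u v n1).
  - change (Derive (fun s => x2 (f u s) + r u s * x2 (n u s)) v = Derive (fun s => x2 (f u s)) v + Derive (fun s => r u s) v * x2 (n u v) + r u v * Derive (fun s => x2 (n u s)) v).
    apply (Derive_lin (fun s => x2 (f u s)) (fun s => r u s) (fun s => x2 (n u s)) v). apply (sp_v _ u v f2). apply (sp_v _ u v Hr). apply (sp_v _ u v n2).
  - change (Derive (fun s => x3 (f u s) + r u s * x3 (n u s)) v = Derive (fun s => x3 (f u s)) v + Derive (fun s => r u s) v * x3 (n u v) + r u v * Derive (fun s => x3 (n u s)) v).
    apply (Derive_lin (fun s => x3 (f u s)) (fun s => r u s) (fun s => x3 (n u s)) v). apply (sp_v _ u v f3). apply (sp_v _ u v Hr). apply (sp_v _ u v n3).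
Qed.

Lemma SN_u f n r u v : HypS f n r -> mk (du4 (sphere_lift f n r) u v) (n u v) = 0.
Proof.
  intros H. pose proof (nn_du f n r u v H) as E0.
  destruct (dS_u f n r u v H) as [E1 [E2 [E3 E4]]].
  destruct H as [_ [_ [_ [_ H]]]]. destruct (H u v) as [Hnn [Hnf _]].
  unfold mk. rewrite E1, E2, E3, E4. unfold dot3 in *.
  transitivity ((x1 (n u v) * x1 (du3 f u v) + x2 (n u v) * x2 (du3 f u v) + x3 (n u v) * x3 (du3 f u v))
    + du r u v * (x1 (n u v) * x1 (n u v) + x2 (n u v) * x2 (n u v) + x3 (n u v) * x3 (n u v) - 1)
    + r u v * (x1 (n u v) * x1 (du3 n u v) + x2 (n u v) * x2 (du3 n u v) + x3 (n u v) * x3 (du3 n u v))).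
  ring. rewrite Hnn, Hnf, E0. ring.
Qed.

Lemma SN_v f n r u v : HypS f n r -> mk (dv4 (sphere_lift f n r) u v) (n u v) = 0.
Proof.
  intros H. pose proof (nn_dv f n r u v H) as E0.
  destruct (dS_v f n r u v H) as [E1 [E2 [E3 E4]]].
  destruct H as [_ [_ [_ [_ H]]]]. destruct (H u v) as [Hnn [_ Hnf]].
  unfold mk. rewrite E1, E2, E3, E4. unfold dot3 in *.
  transitivity ((x1 (n u v) * x1 (dv3 f u v) + x2 (n u v) * x2 (dv3 f u v) + x3 (n u v) * x3 (dv3 f u v))
    + dv r u v * (x1 (n u v) * x1 (n u v) + x2 (n u v) * x2 (n u v) + x3 (n u v) * x3 (n u v) - 1)
    + r u v * (x1 (n u v) * x1 (dv3 n u v) + x2 (n u v) * x2 (dv3 n u v) + x3 (n u v) * x3 (dv3 n u v))).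
  ring. rewrite Hnn, Hnf, E0. ring.
Qed.


Lemma Derive_psi (A1 A2 A3 B1 B2 B3 B4 : R -> R) t :
  ex_derive A1 t -> ex_derive A2 t -> ex_derive A3 t ->
  ex_derive B1 t -> ex_derive B2 t -> ex_derive B3 t -> ex_derive B4 t ->
  Derive (fun y => A1 y * B1 y + A2 y * B2 y + A3 y * B3 y - B4 y) t =
  Derive (fun x => A1 x) t * B1 t + A1 t * Derive (fun x => B1 x) t +
  (Derive (fun x => A2 x) t * B2 t + A2 t * Derive (fun x => B2 x) t) +
  (Derive (fun x => A3 x) t * B3 t + A3 t * Derive (fun x => B3 x) t) - Derive (fun x => B4 x) t.
Proof. intros. apply is_derive_unique. auto_derive; [repeat split; auto|ring]. Qed.

Lemma pe_u (G : Fun2) x y : partials_exist G -> ex_derive (fun s => G s y) x.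
Proof. intros H. exact (proj1 (H x y)). Qed.
Lemma pe_v (G : Fun2) x y : partials_exist G -> ex_derive (fun s => G x s) y.
Proof. intros H. exact (proj2 (H x y)). Qed.

Lemma exd_comp_du g G1 G2 x0 y0 : smooth2 g -> partials_exist G1 -> partials_exist G2 ->
  ex_derive (fun y => du G1 x0 y) y0 -> ex_derive (fun y => du G2 x0 y) y0 ->
  ex_derive (fun y => du (fun a b => g (G1 a b) (G2 a b)) x0 y) y0.
Proof.
  intros Hg H1 H2 K1 K2.
  apply ex_derive_ext with (fun y => du g (G1 x0 y) (G2 x0 y) * du G1 x0 y + dv g (G1 x0 y) (G2 x0 y) * du G2 x0 y).
  { intros y. symmetry. exact (comp_du g G1 G2 x0 y Hg (pe_u G1 x0 y H1) (pe_u G2 x0 y H2)). }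
  destruct (H1 x0 y0) as [_ P1]. destruct (H2 x0 y0) as [_ P2].
  apply (ex_derive_plus (fun y => du g (G1 x0 y) (G2 x0 y) * du G1 x0 y) (fun y => dv g (G1 x0 y) (G2 x0 y) * du G2 x0 y)).
  - apply ex_derive_mult; [eexists; exact (comp_dv_is (du g) G1 G2 x0 y0 (smooth_du g Hg) P1 P2) | exact K1].
  - apply ex_derive_mult; [eexists; exact (comp_dv_is (dv g) G1 G2 x0 y0 (smooth_dv g Hg) P1 P2) | exact K2].
Qed.

Lemma compS_du f n r G1 G2 x y : HypS f n r -> ex_derive (fun s => G1 s y) x -> ex_derive (fun s => G2 s y) x ->
  du4 (comp4 (sphere_lift f n r) G1 G2) x y =
  add4 (scal4 (du G1 x y) (du4 (sphere_lift f n r) (G1 x y) (G2 x y)))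
       (scal4 (du G2 x y) (dv4 (sphere_lift f n r) (G1 x y) (G2 x y))).
Proof.
  intros [_ [_ [_ [[s1 [s2 [s3 s4]]] _]]]] H1 H2.
  unfold add4, scal4, du4, dv4. f_equal; cbn [y1 y2 y3 y4].
  - etransitivity; [exact (comp_du _ G1 G2 x y s1 H1 H2)|]. ring.
  - etransitivity; [exact (comp_du _ G1 G2 x y s2 H1 H2)|]. ring.
  - etransitivity; [exact (comp_du _ G1 G2 x y s3 H1 H2)|]. ring.
  - etransitivity; [exact (comp_du _ G1 G2 x y s4 H1 H2)|]. ring.
Qed.

Lemma compS_dv f n r G1 G2 x y : HypS f n r -> ex_derive (fun s => G1 x s) y -> ex_derive (fun s => G2 x s) y ->
  dv4 (comp4 (sphere_lift f n r) G1 G2) x y =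
  add4 (scal4 (dv G1 x y) (du4 (sphere_lift f n r) (G1 x y) (G2 x y)))
       (scal4 (dv G2 x y) (dv4 (sphere_lift f n r) (G1 x y) (G2 x y))).
Proof.
  intros [_ [_ [_ [[s1 [s2 [s3 s4]]] _]]]] H1 H2.
  unfold add4, scal4, du4, dv4. f_equal; cbn [y1 y2 y3 y4].
  - etransitivity; [exact (comp_dv _ G1 G2 x y s1 H1 H2)|]. ring.
  - etransitivity; [exact (comp_dv _ G1 G2 x y s2 H1 H2)|]. ring.
  - etransitivity; [exact (comp_dv _ G1 G2 x y s3 H1 H2)|]. ring.
  - etransitivity; [exact (comp_dv _ G1 G2 x y s4 H1 H2)|]. ring.
Qed.

Lemma comp3_du F G1 G2 x y : smooth3 F -> ex_derive (fun s => G1 s y) x -> ex_derive (fun s => G2 s y) x ->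
  du3 (comp3 F G1 G2) x y =
  add3 (scal3 (du G1 x y) (du3 F (G1 x y) (G2 x y))) (scal3 (du G2 x y) (dv3 F (G1 x y) (G2 x y))).
Proof.
  intros [s1 [s2 s3]] H1 H2.
  unfold add3, scal3, du3, dv3. f_equal; cbn [x1 x2 x3].
  - etransitivity; [exact (comp_du _ G1 G2 x y s1 H1 H2)|]. ring.
  - etransitivity; [exact (comp_du _ G1 G2 x y s2 H1 H2)|]. ring.
  - etransitivity; [exact (comp_du _ G1 G2 x y s3 H1 H2)|]. ring.
Qed.

Lemma comp3_dv F G1 G2 x y : smooth3 F -> ex_derive (fun s => G1 x s) y -> ex_derive (fun s => G2 x s) y ->
  dv3 (comp3 F G1 G2) x y =
  add3 (scal3 (dv G1 x y) (du3 F (G1 x y) (G2 x y))) (scal3 (dv G2 x y) (dv3 F (G1 x y) (G2 x y))).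
Proof.
  intros [s1 [s2 s3]] H1 H2.
  unfold add3, scal3, du3, dv3. f_equal; cbn [x1 x2 x3].
  - etransitivity; [exact (comp_dv _ G1 G2 x y s1 H1 H2)|]. ring.
  - etransitivity; [exact (comp_dv _ G1 G2 x y s2 H1 H2)|]. ring.
  - etransitivity; [exact (comp_dv _ G1 G2 x y s3 H1 H2)|]. ring.
Qed.

Lemma key f n r G1 G2 x0 y0 : HypS f n r -> partials_exist G1 -> partials_exist G2 ->
  ex_derive (fun y => du G1 x0 y) y0 -> ex_derive (fun y => du G2 x0 y) y0 ->
  mk (dv4 (du4 (comp4 (sphere_lift f n r) G1 G2)) x0 y0) (n (G1 x0 y0) (G2 x0 y0)) =
  - (y1 (du4 (comp4 (sphere_lift f n r) G1 G2) x0 y0) * x1 (dv3 (comp3 n G1 G2) x0 y0) +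
     y2 (du4 (comp4 (sphere_lift f n r) G1 G2) x0 y0) * x2 (dv3 (comp3 n G1 G2) x0 y0) +
     y3 (du4 (comp4 (sphere_lift f n r) G1 G2) x0 y0) * x3 (dv3 (comp3 n G1 G2) x0 y0)).
Proof.
  intros HS P1 P2 K1 K2.
  pose proof HS as [_ [[n1 [n2 n3]] [_ [[s1 [s2 [s3 s4]]] _]]]].
  assert (Hpsi : forall y, mk (du4 (comp4 (sphere_lift f n r) G1 G2) x0 y) (n (G1 x0 y) (G2 x0 y)) = 0).
  { intros y. rewrite (compS_du f n r G1 G2 x0 y HS (pe_u G1 x0 y P1) (pe_u G2 x0 y P2)).
    rewrite mk_lin. rewrite (SN_u f n r _ _ HS), (SN_v f n r _ _ HS). ring. }
  assert (Dz : Derive (fun y => mk (du4 (comp4 (sphere_lift f n r) G1 G2) x0 y) (n (G1 x0 y) (G2 x0 y))) y0 = 0).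
  { rewrite (Derive_ext _ (fun _ => 0)); [apply Derive_const|exact Hpsi]. }
  assert (EA1 : ex_derive (fun y => x1 (n (G1 x0 y) (G2 x0 y))) y0).
  { eexists. exact (comp_dv_is _ G1 G2 x0 y0 n1 (pe_v G1 x0 y0 P1) (pe_v G2 x0 y0 P2)). }
  assert (EA2 : ex_derive (fun y => x2 (n (G1 x0 y) (G2 x0 y))) y0).
  { eexists. exact (comp_dv_is _ G1 G2 x0 y0 n2 (pe_v G1 x0 y0 P1) (pe_v G2 x0 y0 P2)). }
  assert (EA3 : ex_derive (fun y => x3 (n (G1 x0 y) (G2 x0 y))) y0).
  { eexists. exact (comp_dv_is _ G1 G2 x0 y0 n3 (pe_v G1 x0 y0 P1) (pe_v G2 x0 y0 P2)). }
  assert (EB1 : ex_derive (fun y => y1 (du4 (comp4 (sphere_lift f n r) G1 G2) x0 y)) y0).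
  { exact (exd_comp_du _ G1 G2 x0 y0 s1 P1 P2 K1 K2). }
  assert (EB2 : ex_derive (fun y => y2 (du4 (comp4 (sphere_lift f n r) G1 G2) x0 y)) y0).
  { exact (exd_comp_du _ G1 G2 x0 y0 s2 P1 P2 K1 K2). }
  assert (EB3 : ex_derive (fun y => y3 (du4 (comp4 (sphere_lift f n r) G1 G2) x0 y)) y0).
  { exact (exd_comp_du _ G1 G2 x0 y0 s3 P1 P2 K1 K2). }
  assert (EB4 : ex_derive (fun y => y4 (du4 (comp4 (sphere_lift f n r) G1 G2) x0 y)) y0).
  { exact (exd_comp_du _ G1 G2 x0 y0 s4 P1 P2 K1 K2). }
  pose proof (Derive_psi _ _ _ _ _ _ _ y0 EA1 EA2 EA3 EB1 EB2 EB3 EB4) as E.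
  unfold mk in Dz. rewrite E in Dz. clear E.
  unfold mk. cbv beta in Dz.
  change (Derive (fun x => x1 (n (G1 x0 x) (G2 x0 x))) y0) with (x1 (dv3 (comp3 n G1 G2) x0 y0)) in Dz.
  change (Derive (fun x => x2 (n (G1 x0 x) (G2 x0 x))) y0) with (x2 (dv3 (comp3 n G1 G2) x0 y0)) in Dz.
  change (Derive (fun x => x3 (n (G1 x0 x) (G2 x0 x))) y0) with (x3 (dv3 (comp3 n G1 G2) x0 y0)) in Dz.
  change (Derive (fun x => y1 (du4 (comp4 (sphere_lift f n r) G1 G2) x0 x)) y0) with (y1 (dv4 (du4 (comp4 (sphere_lift f n r) G1 G2)) x0 y0)) in Dz.
  change (Derive (fun x => y2 (du4 (comp4 (sphere_lift f n r) G1 G2) x0 x)) y0) with (y2 (dv4 (du4 (comp4 (sphere_lift f n r) G1 G2)) x0 y0)) in Dz.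
  change (Derive (fun x => y3 (du4 (comp4 (sphere_lift f n r) G1 G2) x0 x)) y0) with (y3 (dv4 (du4 (comp4 (sphere_lift f n r) G1 G2)) x0 y0)) in Dz.
  change (Derive (fun x => y4 (du4 (comp4 (sphere_lift f n r) G1 G2) x0 x)) y0) with (y4 (dv4 (du4 (comp4 (sphere_lift f n r) G1 G2)) x0 y0)) in Dz.
  lra.
Qed.


Definition Frame (f n : R -> R -> V3) u v k1 k2 t1 t2 al1 be1 al2 be2 :=
  dot3 t1 t1 = 1 /\ dot3 t2 t2 = 1 /\ dot3 t1 t2 = 0 /\
  t1 = tangent f u v al1 be1 /\ shape n u v al1 be1 = scal3 k1 t1 /\
  t2 = tangent f u v al2 be2 /\ shape n u v al2 be2 = scal3 k2 t2.

Definition XX1 al1 be1 al2 be2 w1 w2 := (be2 * w1 - al2 * w2) / (al1 * be2 - al2 * be1).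
Definition XX2 al1 be1 al2 be2 w1 w2 := (- be1 * w1 + al1 * w2) / (al1 * be2 - al2 * be1).

Lemma V3_eq a b : x1 a = x1 b -> x2 a = x2 b -> x3 a = x3 b -> a = b.
Proof. destruct a, b; simpl; intros; subst; auto. Qed.

Lemma frame_det f n u v k1 k2 t1 t2 al1 be1 al2 be2 :
  Frame f n u v k1 k2 t1 t2 al1 be1 al2 be2 -> al1 * be2 - al2 * be1 <> 0.
Proof.
  intros [H11 [H22 [H12 [T1 [_ [T2 _]]]]]] H0. subst t1 t2.
  unfold dot3, tangent, add3, scal3 in *. cbn [x1 x2 x3] in *.
  set (a1 := x1 (du3 f u v)) in *. set (a2 := x2 (du3 f u v)) in *. set (a3 := x3 (du3 f u v)) in *.
  set (b1 := x1 (dv3 f u v)) in *. set (b2 := x2 (dv3 f u v)) in *. set (b3 := x3 (dv3 f u v)) in *.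
  match type of H11 with ?A = _ => set (P := A) in * end.
  match type of H22 with ?A = _ => set (Q := A) in * end.
  match type of H12 with ?A = _ => set (M := A) in * end.
  assert (E : P * Q - M * M = (al1 * be2 - al2 * be1) ^ 2 *
     ((a1*a1+a2*a2+a3*a3)*(b1*b1+b2*b2+b3*b3) - (a1*b1+a2*b2+a3*b3)^2)) by (unfold P, Q, M; ring).
  rewrite H0, H11, H22, H12 in E. lra.
Qed.

Lemma lin_id a1 b1 a2 b2 w1 w2 P Q : a1*b2 - a2*b1 <> 0 ->
  w1*P + w2*Q = XX1 a1 b1 a2 b2 w1 w2 * (a1*P+b1*Q) + XX2 a1 b1 a2 b2 w1 w2 * (a2*P+b2*Q).
Proof. intros. unfold XX1, XX2. field. auto. Qed.

Lemma frame_tan f n u v k1 k2 t1 t2 al1 be1 al2 be2 w1 w2 :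
  Frame f n u v k1 k2 t1 t2 al1 be1 al2 be2 ->
  tangent f u v w1 w2 = add3 (scal3 (XX1 al1 be1 al2 be2 w1 w2) t1) (scal3 (XX2 al1 be1 al2 be2 w1 w2) t2).
Proof.
  intros HF. pose proof (frame_det _ _ _ _ _ _ _ _ _ _ _ _ HF) as Hd.
  destruct HF as [_ [_ [_ [T1 [_ [T2 _]]]]]]. subst t1 t2.
  unfold tangent, add3, scal3. apply V3_eq; cbn [x1 x2 x3]; apply lin_id; auto.
Qed.

Lemma frame_dn f n u v k1 k2 t1 t2 al1 be1 al2 be2 w1 w2 :
  Frame f n u v k1 k2 t1 t2 al1 be1 al2 be2 ->
  add3 (scal3 w1 (du3 n u v)) (scal3 w2 (dv3 n u v)) =
  add3 (scal3 (- k1 * XX1 al1 be1 al2 be2 w1 w2) t1) (scal3 (- k2 * XX2 al1 be1 al2 be2 w1 w2) t2).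
Proof.
  intros HF. pose proof (frame_det _ _ _ _ _ _ _ _ _ _ _ _ HF) as Hd.
  destruct HF as [_ [_ [_ [_ [S1 [_ S2]]]]]].
  unfold shape, add3, scal3 in S1, S2.
  assert (A1 := f_equal x1 S1). assert (A2 := f_equal x2 S1). assert (A3 := f_equal x3 S1).
  assert (B1 := f_equal x1 S2). assert (B2 := f_equal x2 S2). assert (B3 := f_equal x3 S2).
  cbn [x1 x2 x3] in A1, A2, A3, B1, B2, B3.
  unfold add3, scal3. apply V3_eq; cbn [x1 x2 x3].
  - rewrite (lin_id al1 be1 al2 be2 w1 w2 _ _ Hd). 
    replace (al1 * x1 (du3 n u v) + be1 * x1 (dv3 n u v)) with (- (k1 * x1 t1)) by lra.
    replace (al2 * x1 (du3 n u v) + be2 * x1 (dv3 n u v)) with (- (k2 * x1 t2)) by lra. ring.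
  - rewrite (lin_id al1 be1 al2 be2 w1 w2 _ _ Hd). 
    replace (al1 * x2 (du3 n u v) + be1 * x2 (dv3 n u v)) with (- (k1 * x2 t1)) by lra.
    replace (al2 * x2 (du3 n u v) + be2 * x2 (dv3 n u v)) with (- (k2 * x2 t2)) by lra. ring.
  - rewrite (lin_id al1 be1 al2 be2 w1 w2 _ _ Hd). 
    replace (al1 * x3 (du3 n u v) + be1 * x3 (dv3 n u v)) with (- (k1 * x3 t1)) by lra.
    replace (al2 * x3 (du3 n u v) + be2 * x3 (dv3 n u v)) with (- (k2 * x3 t2)) by lra. ring.
Qed.

Lemma dot_frame t1 t2 A1 A2 B1 B2 : dot3 t1 t1 = 1 -> dot3 t2 t2 = 1 -> dot3 t1 t2 = 0 ->
  dot3 (add3 (scal3 A1 t1) (scal3 A2 t2)) (add3 (scal3 B1 t1) (scal3 B2 t2)) = A1 * B1 + A2 * B2.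
Proof.
  intros H11 H22 H12.
  transitivity (A1 * B1 * dot3 t1 t1 + (A1 * B2 + A2 * B1) * dot3 t1 t2 + A2 * B2 * dot3 t2 t2).
  - unfold dot3, add3, scal3; cbn [x1 x2 x3]; ring.
  - rewrite H11, H22, H12. ring.
Qed.

Lemma Q_formula f n r u v k1 k2 t1 t2 al1 be1 al2 be2 g1 g2 h1 h2 : HypS f n r ->
  Frame f n u v k1 k2 t1 t2 al1 be1 al2 be2 ->
  y1 (add4 (scal4 g1 (du4 (sphere_lift f n r) u v)) (scal4 g2 (dv4 (sphere_lift f n r) u v))) *
    x1 (add3 (scal3 h1 (du3 n u v)) (scal3 h2 (dv3 n u v))) +
  y2 (add4 (scal4 g1 (du4 (sphere_lift f n r) u v)) (scal4 g2 (dv4 (sphere_lift f n r) u v))) *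
    x2 (add3 (scal3 h1 (du3 n u v)) (scal3 h2 (dv3 n u v))) +
  y3 (add4 (scal4 g1 (du4 (sphere_lift f n r) u v)) (scal4 g2 (dv4 (sphere_lift f n r) u v))) *
    x3 (add3 (scal3 h1 (du3 n u v)) (scal3 h2 (dv3 n u v))) =
  - (k1 * XX1 al1 be1 al2 be2 g1 g2 * XX1 al1 be1 al2 be2 h1 h2 + k2 * XX2 al1 be1 al2 be2 g1 g2 * XX2 al1 be1 al2 be2 h1 h2)
  + r u v * (k1 * k1 * XX1 al1 be1 al2 be2 g1 g2 * XX1 al1 be1 al2 be2 h1 h2 + k2 * k2 * XX2 al1 be1 al2 be2 g1 g2 * XX2 al1 be1 al2 be2 h1 h2).
Proof.
  intros HS HF.
  destruct (dS_u f n r u v HS) as [U1 [U2 [U3 _]]].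
  destruct (dS_v f n r u v HS) as [V1 [V2 [V3 _]]].
  pose proof (nn_du f n r u v HS) as Z1. pose proof (nn_dv f n r u v HS) as Z2.
  transitivity (dot3 (tangent f u v g1 g2) (add3 (scal3 h1 (du3 n u v)) (scal3 h2 (dv3 n u v)))
     + r u v * dot3 (add3 (scal3 g1 (du3 n u v)) (scal3 g2 (dv3 n u v))) (add3 (scal3 h1 (du3 n u v)) (scal3 h2 (dv3 n u v)))
     + (g1 * du r u v + g2 * dv r u v) * (h1 * dot3 (n u v) (du3 n u v) + h2 * dot3 (n u v) (dv3 n u v))).
  - unfold add4, scal4. cbn [y1 y2 y3]. rewrite U1, U2, U3, V1, V2, V3.
    unfold dot3, tangent, add3, scal3. cbn [x1 x2 x3]. ring.
  - rewrite Z1, Z2.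
    rewrite (frame_tan _ _ _ _ _ _ _ _ _ _ _ _ g1 g2 HF).
    rewrite (frame_dn _ _ _ _ _ _ _ _ _ _ _ _ g1 g2 HF).
    rewrite (frame_dn _ _ _ _ _ _ _ _ _ _ _ _ h1 h2 HF).
    destruct HF as [H11 [H22 [H12 _]]].
    rewrite !(dot_frame t1 t2 _ _ _ _ H11 H22 H12). ring.
Qed.


Lemma transfer X1 X2 Y1 Y2 c1 c2 : (Y1 <> 0 \/ Y2 <> 0) -> X1 * Y2 - X2 * Y1 = 0 ->
  c1 * Y1 + c2 * Y2 = 0 -> c1 * X1 + c2 * X2 = 0.
Proof.
  intros [H|H] Hc Hd.
  - assert (E : Y1 * (c1 * X1 + c2 * X2) = X1 * (c1 * Y1 + c2 * Y2) - c2 * (X1 * Y2 - X2 * Y1)) by ring.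
    rewrite Hc, Hd in E. replace (X1 * 0 - c2 * 0) with 0 in E by ring.
    destruct (Rmult_integral _ _ E); [contradiction|auto].
  - assert (E : Y2 * (c1 * X1 + c2 * X2) = X2 * (c1 * Y1 + c2 * Y2) + c1 * (X1 * Y2 - X2 * Y1)) by ring.
    rewrite Hc, Hd in E. replace (X2 * 0 + c1 * 0) with 0 in E by ring.
    destruct (Rmult_integral _ _ E); [contradiction|auto].
Qed.

Lemma XX_inv al1 be1 al2 be2 w1 w2 : al1 * be2 - al2 * be1 <> 0 ->
  w1 = al1 * XX1 al1 be1 al2 be2 w1 w2 + al2 * XX2 al1 be1 al2 be2 w1 w2 /\
  w2 = be1 * XX1 al1 be1 al2 be2 w1 w2 + be2 * XX2 al1 be1 al2 be2 w1 w2.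
Proof. intros. unfold XX1, XX2. split; field; auto. Qed.

Lemma XX_of al1 be1 al2 be2 A1 A2 : al1 * be2 - al2 * be1 <> 0 ->
  XX1 al1 be1 al2 be2 (al1 * A1 + al2 * A2) (be1 * A1 + be2 * A2) = A1 /\
  XX2 al1 be1 al2 be2 (al1 * A1 + al2 * A2) (be1 * A1 + be2 * A2) = A2.
Proof. intros. unfold XX1, XX2. split; field; auto. Qed.

Lemma XX_cross al1 be1 al2 be2 w1 w2 z1 z2 : al1 * be2 - al2 * be1 <> 0 ->
  XX1 al1 be1 al2 be2 w1 w2 * XX2 al1 be1 al2 be2 z1 z2 - XX2 al1 be1 al2 be2 w1 w2 * XX1 al1 be1 al2 be2 z1 z2
  = (w1 * z2 - w2 * z1) / (al1 * be2 - al2 * be1).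
Proof. intros. unfold XX1, XX2. field; auto. Qed.

Lemma XX_nz al1 be1 al2 be2 w1 w2 : al1 * be2 - al2 * be1 <> 0 -> (w1 <> 0 \/ w2 <> 0) ->
  (XX1 al1 be1 al2 be2 w1 w2 <> 0 \/ XX2 al1 be1 al2 be2 w1 w2 <> 0).
Proof.
  intros Hd Hw. destruct (XX_inv al1 be1 al2 be2 w1 w2 Hd) as [E1 E2].
  destruct (Req_dec (XX1 al1 be1 al2 be2 w1 w2) 0) as [Z1|Z1]; [|left; auto].
  destruct (Req_dec (XX2 al1 be1 al2 be2 w1 w2) 0) as [Z2|Z2]; [|right; auto].
  rewrite Z1, Z2 in E1, E2. exfalso. destruct Hw; apply H; [rewrite E1|rewrite E2]; ring.
Qed.

Lemma col_nz a b c d : a * d - b * c <> 0 -> (a <> 0 \/ c <> 0) /\ (b <> 0 \/ d <> 0).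
Proof.
  intros H. split.
  - destruct (Req_dec a 0); [|left; auto]. destruct (Req_dec c 0); [|right; auto].
    subst. exfalso. apply H. ring.
  - destruct (Req_dec b 0); [|left; auto]. destruct (Req_dec d 0); [|right; auto].
    subst. exfalso. apply H. ring.
Qed.

Lemma tangent_inj f u v x y x' y' : indep3 (du3 f u v) (dv3 f u v) ->
  tangent f u v x y = tangent f u v x' y' -> x = x' /\ y = y'.
Proof.
  intros Hi E.
  assert (A1 := f_equal x1 E). assert (A2 := f_equal x2 E). assert (A3 := f_equal x3 E).
  unfold tangent, add3, scal3 in A1, A2, A3. cbn [x1 x2 x3] in A1, A2, A3.
  destruct (Hi (x - x') (y - y')) as [H1 H2].
  - unfold add3, scal3, zero3. apply V3_eq; cbn [x1 x2 x3]; lra.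
  - lra.
Qed.

Lemma par_coords SU SV a1 a2 b1 b2 : indep4 SU SV ->
  parallel4 (add4 (scal4 a1 SU) (scal4 a2 SV)) (add4 (scal4 b1 SU) (scal4 b2 SV)) ->
  a1 * b2 - a2 * b1 = 0.
Proof.
  intros Hi Hp. unfold parallel4, indep4 in Hp.
  apply not_all_ex_not in Hp. destruct Hp as [l Hp].
  apply not_all_ex_not in Hp. destruct Hp as [m Hp].
  apply imply_to_and in Hp. destruct Hp as [E Hn].
  destruct (Hi (l * a1 + m * b1) (l * a2 + m * b2)) as [Z1 Z2].
  { rewrite <- E. unfold add4, scal4. cbn [y1 y2 y3 y4]. f_equal; ring. }
  assert (El : l * (a1 * b2 - a2 * b1) = b2 * (l * a1 + m * b1) - b1 * (l * a2 + m * b2)) by ring.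
  assert (Em : m * (a1 * b2 - a2 * b1) = a1 * (l * a2 + m * b2) - a2 * (l * a1 + m * b1)) by ring.
  rewrite Z1, Z2 in El, Em.
  destruct (Req_dec (a1 * b2 - a2 * b1) 0) as [D|D]; auto.
  exfalso. apply Hn. split.
  - apply (Rmult_eq_reg_r (a1 * b2 - a2 * b1)); auto. lra.
  - apply (Rmult_eq_reg_r (a1 * b2 - a2 * b1)); auto. lra.
Qed.

Lemma indep_lift SU SV a1 a2 b1 b2 : indep4 SU SV -> a1 * b2 - a2 * b1 <> 0 ->
  indep4 (add4 (scal4 a1 SU) (scal4 a2 SV)) (add4 (scal4 b1 SU) (scal4 b2 SV)).
Proof.
  intros Hi D l m E.
  destruct (Hi (l * a1 + m * b1) (l * a2 + m * b2)) as [Z1 Z2].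
  { rewrite <- E. unfold add4, scal4. cbn [y1 y2 y3 y4]. f_equal; ring. }
  assert (El : l * (a1 * b2 - a2 * b1) = b2 * (l * a1 + m * b1) - b1 * (l * a2 + m * b2)) by ring.
  assert (Em : m * (a1 * b2 - a2 * b1) = a1 * (l * a2 + m * b2) - a2 * (l * a1 + m * b1)) by ring.
  rewrite Z1, Z2 in El, Em. split.
  - apply (Rmult_eq_reg_r (a1 * b2 - a2 * b1)); auto. lra.
  - apply (Rmult_eq_reg_r (a1 * b2 - a2 * b1)); auto. lra.
Qed.

Lemma indep_coef t1 t2 a1 a2 b1 b2 :
  indep3 (add3 (scal3 a1 t1) (scal3 a2 t2)) (add3 (scal3 b1 t1) (scal3 b2 t2)) -> a1 * b2 - a2 * b1 <> 0.
Proof.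
  intros Hi D.
  assert (K : forall l m, l * a1 + m * b1 = 0 -> l * a2 + m * b2 = 0 -> l = 0 /\ m = 0).
  { intros l m E1 E2. apply Hi. unfold add3, scal3, zero3. apply V3_eq; cbn [x1 x2 x3].
    - transitivity ((l * a1 + m * b1) * x1 t1 + (l * a2 + m * b2) * x1 t2); [ring|rewrite E1, E2; ring].
    - transitivity ((l * a1 + m * b1) * x2 t1 + (l * a2 + m * b2) * x2 t2); [ring|rewrite E1, E2; ring].
    - transitivity ((l * a1 + m * b1) * x3 t1 + (l * a2 + m * b2) * x3 t2); [ring|rewrite E1, E2; ring]. }
  destruct (Req_dec a1 0) as [Ha1|Ha1].
  - destruct (Req_dec b1 0) as [Hb1|Hb1].
    + destruct (Req_dec a2 0) as [Ha2|Ha2].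
      * destruct (K 1 0) as [F _]; [subst; ring|subst; ring|lra].
      * destruct (K b2 (-a2)) as [_ F]; [subst; ring|ring|lra].
    + destruct (K b1 (-a1)) as [F _]; [ring|lra|lra].
  - destruct (K b1 (-a1)) as [_ F]; [ring|lra|lra].
Qed.

Lemma dot_scal c x y : dot3 (scal3 c x) y = c * dot3 x y.
Proof. unfold dot3, scal3; cbn [x1 x2 x3]; ring. Qed.

Lemma shape_dot f n u v k1 k2 t1 t2 al1 be1 al2 be2 w1 w2 a1 a2 :
  Frame f n u v k1 k2 t1 t2 al1 be1 al2 be2 ->
  dot3 (shape n u v w1 w2) (add3 (scal3 a1 t1) (scal3 a2 t2)) =
  k1 * XX1 al1 be1 al2 be2 w1 w2 * a1 + k2 * XX2 al1 be1 al2 be2 w1 w2 * a2.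
Proof.
  intros HF. unfold shape. rewrite dot_scal.
  rewrite (frame_dn _ _ _ _ _ _ _ _ _ _ _ _ w1 w2 HF).
  destruct HF as [H11 [H22 [H12 _]]]. rewrite (dot_frame t1 t2 _ _ _ _ H11 H22 H12). ring.
Qed.

Lemma du_aff (d : Fun2) c a b x y : (forall p q, d p q = c + a * p + b * q) -> du d x y = a /\ dv d x y = b.
Proof.
  intros E. unfold du, dv. split.
  - rewrite (Derive_ext _ (fun s => c + a * s + b * y)); [|intros; apply E].
    apply is_derive_unique. auto_derive; auto. ring.
  - rewrite (Derive_ext _ (fun s => c + a * x + b * s)); [|intros; apply E].
    apply is_derive_unique. auto_derive; auto. ring.
Qed.

Lemma par_refl X Y : X = Y -> parallel4 X Y.
Proof.
  intros <- H. destruct (H 1 (-1)) as [F _]; [|lra].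
  destruct X as [q1 q2 q3 q4]; unfold add4, scal4, zero4; cbn [y1 y2 y3 y4]; f_equal; ring.
Qed.

Lemma first_order f n r G1 G2 x y : HypS f n r -> partials_exist G1 -> partials_exist G2 ->
  mk (du4 (comp4 (sphere_lift f n r) G1 G2) x y) (n (G1 x y) (G2 x y)) = 0 /\
  mk (dv4 (comp4 (sphere_lift f n r) G1 G2) x y) (n (G1 x y) (G2 x y)) = 0.
Proof.
  intros HS P1 P2. split.
  - rewrite (compS_du f n r G1 G2 x y HS (pe_u G1 x y P1) (pe_u G2 x y P2)).
    rewrite mk_lin, (SN_u f n r _ _ HS), (SN_v f n r _ _ HS). ring.
  - rewrite (compS_dv f n r G1 G2 x y HS (pe_v G1 x y P1) (pe_v G2 x y P2)).
    rewrite mk_lin, (SN_u f n r _ _ HS), (SN_v f n r _ _ HS). ring.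
Qed.


Lemma jac_prod a b c d e1 e2 : a * d - b * c <> 0 -> (e1 <> 0 \/ e2 <> 0) ->
  (a * e1 + b * e2 <> 0 \/ c * e1 + d * e2 <> 0).
Proof.
  intros H He.
  destruct (Req_dec (a * e1 + b * e2) 0) as [Z1|Z1]; [|left; auto].
  destruct (Req_dec (c * e1 + d * e2) 0) as [Z2|Z2]; [|right; auto].
  exfalso.
  assert (E1 : (a * d - b * c) * e1 = d * (a * e1 + b * e2) - b * (c * e1 + d * e2)) by ring.
  assert (E2 : (a * d - b * c) * e2 = a * (c * e1 + d * e2) - c * (a * e1 + b * e2)) by ring.
  rewrite Z1, Z2 in E1, E2.
  destruct He as [He|He]; apply He; apply (Rmult_eq_reg_l (a * d - b * c)); auto; lra.
Qed.

Lemma step1 K1 K2 a1 a2 Xg1 Xg2 Xd1 Xd2 : (Xd1 <> 0 \/ Xd2 <> 0) ->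
  Xg1 * Xd2 - Xg2 * Xd1 = 0 -> K1 * Xd1 * a1 + K2 * Xd2 * a2 = 0 ->
  K1 * a1 * Xg1 + K2 * a2 * Xg2 = 0.
Proof.
  intros Hn Hc Hd. apply (transfer Xg1 Xg2 Xd1 Xd2 (K1 * a1) (K2 * a2) Hn Hc). lra.
Qed.

Lemma final_alg K1 K2 r a1 a2 b1 b2 Xg1 Xg2 Xh1 Xh2 : K1 <> 0 -> K2 <> 0 ->
  (Xg1 <> 0 \/ Xg2 <> 0) -> (Xh1 <> 0 \/ Xh2 <> 0) ->
  K1 * a1 * Xg1 + K2 * a2 * Xg2 = 0 -> K1 * b1 * Xh1 + K2 * b2 * Xh2 = 0 ->
  - (- (K1 * Xg1 * Xh1 + K2 * Xg2 * Xh2) + r * (K1 * K1 * Xg1 * Xh1 + K2 * K2 * Xg2 * Xh2)) = 0 ->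
  (/ K2 - r) * a1 * b1 + (/ K1 - r) * a2 * b2 = 0.
Proof.
  intros H1 H2 Hg Hh Ca Cb Q.
  set (A1 := K2 * a2). set (A2 := - K1 * a1). set (B1 := K2 * b2). set (B2 := - K1 * b1).
  assert (S1 : ((1 - r * K1) * K1 * Xh1) * A1 + ((1 - r * K2) * K2 * Xh2) * A2 = 0).
  { apply (transfer A1 A2 Xg1 Xg2 _ _ Hg). unfold A1, A2. lra. lra. }
  assert (S2 : ((1 - r * K1) * K1 * A1) * B1 + ((1 - r * K2) * K2 * A2) * B2 = 0).
  { apply (transfer B1 B2 Xh1 Xh2 _ _ Hh). unfold B1, B2. lra. lra. }
  transitivity ((((1 - r * K1) * K1 * A1) * B1 + ((1 - r * K2) * K2 * A2) * B2) / (K1 * K1 * K2 * K2)).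
  - unfold A1, A2, B1, B2. field. auto.
  - rewrite S2. unfold Rdiv. ring.
Qed.


Theorem theorem2
  (f n : R -> R -> V3) (k1 k2 : Fun2) (r : Fun2)
  (u v : R) (t1 t2 : V3) (a1 a2 b1 b2 : R) :
  regular_surface f ->
  unit_normal f n ->
  (* no umbilic / parabolic points: distinct nonzero principal curvatures *)
  (forall u' v', k1 u' v' <> k2 u' v' /\ k1 u' v' <> 0 /\ k2 u' v' <> 0 /\
     principal_curvature f n u' v' (k1 u' v') /\
     principal_curvature f n u' v' (k2 u' v')) ->
  tangent_sphere_congruence f n r ->
  (* orthonormal principal frame (t1, t2, n) at f(u,v) *)
  dot3 t1 t1 = 1 -> dot3 t2 t2 = 1 -> dot3 t1 t2 = 0 ->
  principal_dir f n u v (k1 u v) t1 ->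
  principal_dir f n u v (k2 u v) t2 ->
  let a := add3 (scal3 a1 t1) (scal3 a2 t2) in
  let b := add3 (scal3 b1 t1) (scal3 b2 t2) in
  indep3 a b ->
  (L_conj_sphere f n r u v a b <->
   (/ k2 u v - r u v) * a1 * b1 + (/ k1 u v - r u v) * a2 * b2 = 0).
Proof.
  intros Hreg Hunit Hk Hsc H11 H22 H12 P1 P2 a b Hab.
  destruct (Hk u v) as [_ [K1nz [K2nz _]]].
  destruct P1 as [_ [al1 [be1 [T1 S1]]]].
  destruct P2 as [_ [al2 [be2 [T2 S2]]]].
  assert (HF : Frame f n u v (k1 u v) (k2 u v) t1 t2 al1 be1 al2 be2).
  { unfold Frame. repeat split; auto. }
  pose proof (frame_det _ _ _ _ _ _ _ _ _ _ _ _ HF) as Hdet.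
  destruct Hreg as [sf Hfi].
  destruct Hunit as [sn Hn].
  destruct Hsc as [sr [sS HSi]].
  assert (HS : HypS f n r) by exact (conj sf (conj sn (conj sr (conj sS Hn)))).
  split.
  - intros [_ [d1 [d2 [Hd [p [q [Dp [Dq H]]]]]]]].
    cbv zeta in H. destruct H as [Ca [Cb LN]].
    destruct LN as [_ [e1 [e2 [He [p' [q' [Ep [Eq H]]]]]]]].
    cbv zeta in H. destruct H as [Pu [Pv [_ [_ Huv]]]].
    pose proof Hd as [sd1 [sd2 _]]. pose proof He as [se1 [se2 _]].
    pose proof (diffeo_jac d1 d2 p q Hd) as JD.
    pose proof (diffeo_jac e1 e2 p' q' He) as JE.
    set (G1 := fun x y => d1 (e1 x y) (e2 x y)).
    set (G2 := fun x y => d2 (e1 x y) (e2 x y)).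
    assert (PG1 : partials_exist G1)
      by exact (comp_partials d1 e1 e2 sd1 (smooth_partials e1 se1) (smooth_partials e2 se2)).
    assert (PG2 : partials_exist G2)
      by exact (comp_partials d2 e1 e2 sd2 (smooth_partials e1 se1) (smooth_partials e2 se2)).
    assert (KG1 : ex_derive (fun y => du G1 p' y) q')
      by exact (exd_comp_du d1 e1 e2 p' q' sd1 (smooth_partials e1 se1) (smooth_partials e2 se2)
                  (sp_v (du e1) p' q' (smooth_du e1 se1)) (sp_v (du e2) p' q' (smooth_du e2 se2))).
    assert (KG2 : ex_derive (fun y => du G2 p' y) q')
      by exact (exd_comp_du d2 e1 e2 p' q' sd2 (smooth_partials e1 se1) (smooth_partials e2 se2)
                  (sp_v (du e1) p' q' (smooth_du e1 se1)) (sp_v (du e2) p' q' (smooth_du e2 se2))).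
    assert (EG1 : G1 p' q' = u) by (unfold G1; rewrite Ep, Eq; exact Dp).
    assert (EG2 : G2 p' q' = v) by (unfold G2; rewrite Ep, Eq; exact Dq).
    assert (g1E : du G1 p' q' = du d1 p q * du e1 p' q' + dv d1 p q * du e2 p' q').
    { unfold G1. rewrite (comp_du d1 e1 e2 p' q' sd1 (sp_u e1 p' q' se1) (sp_u e2 p' q' se2)).
      rewrite Ep, Eq. reflexivity. }
    assert (g2E : du G2 p' q' = du d2 p q * du e1 p' q' + dv d2 p q * du e2 p' q').
    { unfold G2. rewrite (comp_du d2 e1 e2 p' q' sd2 (sp_u e1 p' q' se1) (sp_u e2 p' q' se2)).
      rewrite Ep, Eq. reflexivity. }
    assert (h1E : dv G1 p' q' = du d1 p q * dv e1 p' q' + dv d1 p q * dv e2 p' q').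
    { unfold G1. rewrite (comp_dv d1 e1 e2 p' q' sd1 (sp_v e1 p' q' se1) (sp_v e2 p' q' se2)).
      rewrite Ep, Eq. reflexivity. }
    assert (h2E : dv G2 p' q' = du d2 p q * dv e1 p' q' + dv d2 p q * dv e2 p' q').
    { unfold G2. rewrite (comp_dv d2 e1 e2 p' q' sd2 (sp_v e1 p' q' se1) (sp_v e2 p' q' se2)).
      rewrite Ep, Eq. reflexivity. }
    apply par_hyp_mk in Huv.
    change (mk (dv4 (du4 (comp4 (sphere_lift f n r) G1 G2)) p' q') (n (G1 p' q') (G2 p' q')) = 0) in Huv.
    rewrite (key f n r G1 G2 p' q' HS PG1 PG2 KG1 KG2) in Huv.
    rewrite (compS_du f n r G1 G2 p' q' HS (pe_u G1 p' q' PG1) (pe_u G2 p' q' PG2)) in Huv.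
    rewrite (comp3_dv n G1 G2 p' q' sn (pe_v G1 p' q' PG1) (pe_v G2 p' q' PG2)) in Huv.
    rewrite EG1, EG2 in Huv.
    rewrite (Q_formula f n r u v _ _ _ _ _ _ _ _ _ _ _ _ HS HF) in Huv.
    change (parallel4 (du4 (comp4 (sphere_lift f n r) G1 G2) p' q') (du4 (comp4 (sphere_lift f n r) d1 d2) p q)) in Pu.
    rewrite (compS_du f n r G1 G2 p' q' HS (pe_u G1 p' q' PG1) (pe_u G2 p' q' PG2)) in Pu.
    rewrite (compS_du f n r d1 d2 p q HS (sp_u d1 p q sd1) (sp_u d2 p q sd2)) in Pu.
    rewrite EG1, EG2, Dp, Dq in Pu.
    apply par_coords in Pu; [|exact (HSi u v)].
    change (parallel4 (dv4 (comp4 (sphere_lift f n r) G1 G2) p' q') (dv4 (comp4 (sphere_lift f n r) d1 d2) p q)) in Pv.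
    rewrite (compS_dv f n r G1 G2 p' q' HS (pe_v G1 p' q' PG1) (pe_v G2 p' q' PG2)) in Pv.
    rewrite (compS_dv f n r d1 d2 p q HS (sp_v d1 p q sd1) (sp_v d2 p q sd2)) in Pv.
    rewrite EG1, EG2, Dp, Dq in Pv.
    apply par_coords in Pv; [|exact (HSi u v)].
    destruct Ca as [x [y [Ex Dx]]].
    rewrite (comp3_du f d1 d2 p q sf (sp_u d1 p q sd1) (sp_u d2 p q sd2)), Dp, Dq in Ex.
    change (tangent f u v (du d1 p q) (du d2 p q) = tangent f u v x y) in Ex.
    apply tangent_inj in Ex; [|exact (Hfi u v)]. destruct Ex as [Ex1 Ex2]. subst x y.
    change (dot3 (shape n u v (du d1 p q) (du d2 p q)) (add3 (scal3 a1 t1) (scal3 a2 t2)) = 0) in Dx.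
    rewrite (shape_dot _ _ _ _ _ _ _ _ _ _ _ _ _ _ _ _ HF) in Dx.
    destruct Cb as [x [y [Ey Dy]]].
    rewrite (comp3_dv f d1 d2 p q sf (sp_v d1 p q sd1) (sp_v d2 p q sd2)), Dp, Dq in Ey.
    change (tangent f u v (dv d1 p q) (dv d2 p q) = tangent f u v x y) in Ey.
    apply tangent_inj in Ey; [|exact (Hfi u v)]. destruct Ey as [Ey1 Ey2]. subst x y.
    change (dot3 (shape n u v (dv d1 p q) (dv d2 p q)) (add3 (scal3 b1 t1) (scal3 b2 t2)) = 0) in Dy.
    rewrite (shape_dot _ _ _ _ _ _ _ _ _ _ _ _ _ _ _ _ HF) in Dy.
    destruct (col_nz _ _ _ _ JD) as [NDu NDv].
    destruct (col_nz _ _ _ _ JE) as [NEu NEv].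
    assert (Ng : du G1 p' q' <> 0 \/ du G2 p' q' <> 0).
    { rewrite g1E, g2E. apply jac_prod; auto. }
    assert (Nh : dv G1 p' q' <> 0 \/ dv G2 p' q' <> 0).
    { rewrite h1E, h2E. apply jac_prod; auto. }
    apply (XX_nz al1 be1 al2 be2 _ _ Hdet) in Ng, Nh, NDu, NDv.
    assert (Cu := XX_cross al1 be1 al2 be2 (du G1 p' q') (du G2 p' q') (du d1 p q) (du d2 p q) Hdet).
    rewrite Pu in Cu. replace (0 / (al1 * be2 - al2 * be1)) with 0 in Cu by (field; auto).
    assert (Cv := XX_cross al1 be1 al2 be2 (dv G1 p' q') (dv G2 p' q') (dv d1 p q) (dv d2 p q) Hdet).
    rewrite Pv in Cv. replace (0 / (al1 * be2 - al2 * be1)) with 0 in Cv by (field; auto).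
    pose proof (step1 _ _ _ _ _ _ _ _ NDu Cu Dx) as Sa.
    pose proof (step1 _ _ _ _ _ _ _ _ NDv Cv Dy) as Sb.
    exact (final_alg _ _ _ _ _ _ _ _ _ _ _ K1nz K2nz Ng Nh Sa Sb Huv).
  - intros Heq. split; [exact Hab|].
    pose proof (indep_coef t1 t2 a1 a2 b1 b2 Hab) as Hab'.
    set (A1 := k2 u v * a2). set (A2 := - k1 u v * a1).
    set (B1 := k2 u v * b2). set (B2 := - k1 u v * b1).
    set (Pa1 := al1 * A1 + al2 * A2). set (Pa2 := be1 * A1 + be2 * A2).
    set (Pb1 := al1 * B1 + al2 * B2). set (Pb2 := be1 * B1 + be2 * B2).
    assert (Hdet2 : Pa1 * Pb2 - Pb1 * Pa2 <> 0).
    { replace (Pa1 * Pb2 - Pb1 * Pa2) with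
        ((al1 * be2 - al2 * be1) * (k1 u v * k2 u v) * (a1 * b2 - a2 * b1))
        by (unfold Pa1, Pa2, Pb1, Pb2, A1, A2, B1, B2; ring).
      apply Rmult_integral_contrapositive_currified; [apply Rmult_integral_contrapositive_currified|]; auto. }
    assert (Hdet3 : Pa1 * Pb2 - Pa2 * Pb1 <> 0) by (intro Z; apply Hdet2; lra).
    set (d1 := fun p q : R => u + Pa1 * p + Pb1 * q).
    set (d2 := fun p q : R => v + Pa2 * p + Pb2 * q).
    assert (Ed1 : forall p q, d1 p q = u + Pa1 * p + Pb1 * q) by reflexivity.
    assert (Ed2 : forall p q, d2 p q = v + Pa2 * p + Pb2 * q) by reflexivity.
    assert (sd1 : smooth2 d1) by (intro k; exact (affine_Ck k d1 u Pa1 Pb1 Ed1)).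
    assert (sd2 : smooth2 d2) by (intro k; exact (affine_Ck k d2 v Pa2 Pb2 Ed2)).
    destruct (du_aff d1 u Pa1 Pb1 0 0 Ed1) as [Du1 Dv1].
    destruct (du_aff d2 v Pa2 Pb2 0 0 Ed2) as [Du2 Dv2].
    assert (D10 : d1 0 0 = u) by (unfold d1; ring).
    assert (D20 : d2 0 0 = v) by (unfold d2; ring).
    destruct (XX_of al1 be1 al2 be2 A1 A2 Hdet) as [XA1 XA2].
    destruct (XX_of al1 be1 al2 be2 B1 B2 Hdet) as [XB1 XB2].
    exists d1, d2. split; [exact (affine_diffeo d1 d2 u v Pa1 Pb1 Pa2 Pb2 Hdet2 Ed1 Ed2)|].
    exists 0, 0. split; [exact D10|]. split; [exact D20|]. cbv zeta.
    split; [|split].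
    + exists Pa1, Pa2. split.
      * rewrite (comp3_du f d1 d2 0 0 sf (sp_u d1 0 0 sd1) (sp_u d2 0 0 sd2)), D10, D20, Du1, Du2.
        reflexivity.
      * change (dot3 (shape n u v Pa1 Pa2) (add3 (scal3 a1 t1) (scal3 a2 t2)) = 0).
        rewrite (shape_dot _ _ _ _ _ _ _ _ _ _ _ _ _ _ _ _ HF).
        unfold Pa1, Pa2. rewrite XA1, XA2. unfold A1, A2. ring.
    + exists Pb1, Pb2. split.
      * rewrite (comp3_dv f d1 d2 0 0 sf (sp_v d1 0 0 sd1) (sp_v d2 0 0 sd2)), D10, D20, Dv1, Dv2.
        reflexivity.
      * change (dot3 (shape n u v Pb1 Pb2) (add3 (scal3 b1 t1) (scal3 b2 t2)) = 0).
        rewrite (shape_dot _ _ _ _ _ _ _ _ _ _ _ _ _ _ _ _ HF).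
        unfold Pb1, Pb2. rewrite XB1, XB2. unfold B1, B2. ring.
    + unfold L_conj_net. split.
      * change (indep4 (du4 (comp4 (sphere_lift f n r) d1 d2) 0 0) (dv4 (comp4 (sphere_lift f n r) d1 d2) 0 0)).
        rewrite (compS_du f n r d1 d2 0 0 HS (sp_u d1 0 0 sd1) (sp_u d2 0 0 sd2)).
        rewrite (compS_dv f n r d1 d2 0 0 HS (sp_v d1 0 0 sd1) (sp_v d2 0 0 sd2)).
        rewrite D10, D20, Du1, Du2, Dv1, Dv2.
        apply indep_lift; [exact (HSi u v)| exact Hdet3].
      * set (e1 := fun p q : R => p). set (e2 := fun p q : R => q).
        exists e1, e2. split.
        { apply (affine_diffeo e1 e2 0 0 1 0 0 1); [lra| intros; unfold e1; ring | intros; unfold e2; ring]. }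
        exists 0, 0. split; [reflexivity|]. split; [reflexivity|]. cbv zeta.
        split; [apply par_refl; reflexivity|]. split; [apply par_refl; reflexivity|].
        destruct (first_order f n r d1 d2 0 0 HS (smooth_partials d1 sd1) (smooth_partials d2 sd2)) as [F1 F2].
        split; [apply par_hyp_mk; exact F1|]. split; [apply par_hyp_mk; exact F2|].
        apply par_hyp_mk.
        change (mk (dv4 (du4 (comp4 (sphere_lift f n r) d1 d2)) 0 0) (n (d1 0 0) (d2 0 0)) = 0).
        rewrite (key f n r d1 d2 0 0 HS (smooth_partials d1 sd1) (smooth_partials d2 sd2)
                   (sp_v (du d1) 0 0 (smooth_du d1 sd1)) (sp_v (du d2) 0 0 (smooth_du d2 sd2))).
        rewrite (compS_du f n r d1 d2 0 0 HS (sp_u d1 0 0 sd1) (sp_u d2 0 0 sd2)).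
        rewrite (comp3_dv n d1 d2 0 0 sn (sp_v d1 0 0 sd1) (sp_v d2 0 0 sd2)).
        rewrite D10, D20, Du1, Du2, Dv1, Dv2.
        rewrite (Q_formula f n r u v _ _ _ _ _ _ _ _ _ _ _ _ HS HF).
        unfold Pa1, Pa2, Pb1, Pb2. rewrite XA1, XA2, XB1, XB2. unfold A1, A2, B1, B2.
        transitivity ((k1 u v) ^ 2 * (k2 u v) ^ 2 *
          ((/ k2 u v - r u v) * a1 * b1 + (/ k1 u v - r u v) * a2 * b2)).
        { field. auto. }
        rewrite Heq. ring.
Qed.
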